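(* Let $(W,S)$ be a Coxeter group with $m_{st}\in\{1,2,3\}$ for all $s,t\in S$, in the one-parameter case, and let $(\mathfrak C,I,m)$ be a $W$-graph with weights in $\mathbb Z[v^{\pm1}]$ all of which are nonnegative integers, i.e. $m^s_{xy}\in\mathbb N$ for all $x,y\in\mathfrak C$, $s\in S$. Let $x,y\in\mathfrak C$ be such that $I(x)$ and $I(y)$ are joined by a transversal edge of the compatibility graph. Then $m^s_{xy}=m^t_{yx}\in\{0,1\}$ for all $s\in I(x)\setminus I(y)$ and $t\in I(y)\setminus I(x)$.
   Context: One-parameter case: $\Gamma=\mathbb Z$, $L(s)=1$, $v_s=v$, $H$ the $\mathbb Z[v^{\pm1}]$-algebra with generators $T_s$, relations $T_s^2=1+(v-v^{-1})T_s$ and braid relations $T_sT_tT_s\cdots=T_tT_sT_t\cdots$ ($m_{st}$ factors). A $W$-graph with weights in a commutative $\mathbb Z[v^{\pm1}]$-algebra $k$ is a set $\mathfrak C$ with a map $I:\mathfrak C\to2^S$ and column-finite matrices $m^s\in k^{\mathfrak C\times\mathfrak C}$ ($s\in S$) such that $m^s_{xy}\neq0\Rightarrow s\in I(x)\setminus I(y)$ and the matrices $\omega(T_s)_{xy}:=-v^{-1}$ if $x=y$, $s\in I(x)$; $v$ if $x=y$, $s\notin I(x)$; $m^s_{xy}$ otherwise, define a representation of $H$ on the free module $k^{(\mathfrak C)}$. Two subsets $I,J\subseteq S$ are joined by a transversal edge of the compatibility graph if $I\setminus J\neq\emptyset$, $J\setminus I\neq\emptyset$, and every $s\in I\setminus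 J$ is joined to every $t\in J\setminus I$ in the Dynkin diagram (i.e. $m_{st}\ge3$). *)

(* Defs.v *)
From HB Require Import structures.
From mathcomp Require Import all_boot all_order all_algebra.
Set Implicit Arguments. Unset Strict Implicit. Unset Printing Implicit Defensive.
Import Order.TTheory GRing.Theory Num.Theory.
Local Open Scope ring_scope.

(* Ambient field containing Z[v^{+-1}]: the fraction field of Z[v].
   Z[v^{+-1}] embeds injectively, so identities between elements of
   Z[v^{+-1}] hold in Z[v^{+-1}] iff they hold here. *)
Definition Kv := {fraction {poly int}}.
Definition vK : Kv := FracField.tofrac ('X : {poly int}).

Section WGraph.
Variables (S C : eqType).

(* Column-finite C x C matrices over Kv, carried with a column-support
   function: sA z is a list containing every x with A x z != 0. *)
Definition cfmx := ((C -> C -> Kv) * (C -> seq C))%type.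

Definition cfid : cfmx := (fun x z => (x == z)%:R, fun z => [:: z]).

Definition cfmul (A B : cfmx) : cfmx :=
  (fun x z => \sum_(y <- undup (B.2 z)) A.1 x y * B.1 y z,
   fun z => flatten (map A.2 (B.2 z))).

(* omega(T_s) for the W-graph (C, I, m); supp s y lists a superset of the
   support of column y of m^s (column finiteness). *)
Definition omega (I : C -> pred S) (m : S -> C -> C -> nat)
    (supp : S -> C -> seq C) (s : S) : cfmx :=
  (fun x y => if x == y then (if I x s then - vK^-1 else vK)
              else (m s x y)%:R,
   fun y => y :: supp s y).

Fixpoint braidprod (w : S -> cfmx) (n : nat) (s t : S) : cfmx :=
  match n with
  | 0 => cfid
  | n'.+1 => cfmul (w s) (braidprod w n' t s)
  end.

Definition hecke_rep (mst : S -> S -> nat) (w : S -> cfmx) : Prop :=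
  (forall s x z, (cfmul (w s) (w s)).1 x z
                 = (x == z)%:R + (vK - vK^-1) * (w s).1 x z) /\
  (forall s t, s != t -> forall x z,
      (braidprod w (mst s t) s t).1 x z = (braidprod w (mst s t) t s).1 x z).

Definition is_WGraph (mst : S -> S -> nat) (I : C -> pred S)
    (m : S -> C -> C -> nat) (supp : S -> C -> seq C) : Prop :=
  (forall s x y, m s x y != 0%N -> x \in supp s y) /\
  (forall s x y, m s x y != 0%N -> I x s && ~~ I y s) /\
  hecke_rep mst (omega I m supp).

Definition transversal_edge (mst : S -> S -> nat) (J K : pred S) : Prop :=
  (exists s, J s && ~~ K s) /\ (exists t, K t && ~~ J t) /\
  (forall s t, J s && ~~ K s -> K t && ~~ J t -> (3 <= mst s t)%N).

End WGraph.

(* Main.v *)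
Require Import Defs.
From HB Require Import structures.
From mathcomp Require Import all_boot all_order all_algebra.
Set Implicit Arguments. Unset Strict Implicit. Unset Printing Implicit Defensive.
Import GRing.Theory Num.Theory.
Local Open Scope ring_scope.

Lemma vK_neq0 : vK != 0.
Proof. by rewrite /vK -(rmorph0 (@FracField.tofrac _)) tofrac_eq polyX_eq0. Qed.

Lemma vKinv_neq0 : vK + vK^-1 != 0.
Proof.
apply/eqP => H.
have : (vK + vK^-1) * vK = 0 by rewrite H mul0r.
rewrite mulrDl mulVf ?vK_neq0 // /vK -(rmorph1 (@FracField.tofrac _)) -rmorphM -rmorphD.
move/eqP; rewrite -(rmorph0 (@FracField.tofrac _)) tofrac_eq => /eqP E.
have := congr1 (fun p : {poly int} => p.[0]) E.
by rewrite /= !hornerE.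
Qed.

Lemma natKv_inj (a b : nat) : (a%:R : Kv) = b%:R -> a = b.
Proof.
rewrite -!(rmorph_nat (@FracField.tofrac _)) => /eqP; rewrite tofrac_eq.
rewrite -!polyC_natr => /eqP /polyC_inj /eqP; rewrite eqr_nat => /eqP //.
Qed.

Lemma sum_single (T : eqType) (r : seq T) (F : T -> Kv) u :
  uniq r -> (forall a, a != u -> F a = 0) -> (u \notin r -> F u = 0) ->
  \sum_(a <- r) F a = F u.
Proof.
move=> ur H0 Hu; case: (boolP (u \in r)) => ur'.
  by rewrite (bigD1_seq u) //= big1 ?addr0.
rewrite big1_seq ?Hu // => a /andP[_ ar]; apply: H0; apply/eqP => e.
by subst; rewrite ar in ur'.
Qed.

Lemma sum_lists (T : eqType) (r1 r2 : seq T) (F : T -> Kv) :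
  uniq r1 -> uniq r2 -> (forall a, F a != 0 -> (a \in r1) && (a \in r2)) ->
  \sum_(a <- r1) F a = \sum_(a <- r2) F a.
Proof.
move=> u1 u2 H.
have E1 : \sum_(a <- r1) F a = \sum_(a <- [seq a <- r1 | a \in r2]) F a.
  rewrite big_filter (bigID (fun a => a \in r2)) /= [X in _ + X]big1_seq ?addr0 //.
  move=> a /andP[na ar]; apply/eqP; apply: contraT => /H/andP[_].
  by rewrite (negbTE na).
have E2 : \sum_(a <- r2) F a = \sum_(a <- [seq a <- r2 | a \in r1]) F a.
  rewrite big_filter (bigID (fun a => a \in r1)) /= [X in _ + X]big1_seq ?addr0 //.
  move=> a /andP[na ar]; apply/eqP; apply: contraT => /H/andP[].
  by rewrite (negbTE na).
rewrite E1 E2; apply: perm_big; apply: uniq_perm; rewrite ?filter_uniq //.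
by move=> a; rewrite !mem_filter andbC.
Qed.

Definition valid (C : eqType) (A : cfmx C) :=
  forall x z, A.1 x z != 0 -> x \in A.2 z.

Lemma cfmulE (C : eqType) (A B : cfmx C) x z :
  (cfmul A B).1 x z = \sum_(y <- undup (B.2 z)) A.1 x y * B.1 y z.
Proof. by []. Qed.

Lemma cfmul_mem (C : eqType) (A B : cfmx C) x y z :
  y \in B.2 z -> x \in A.2 y -> x \in (cfmul A B).2 z.
Proof. by move=> yB xA; apply/flattenP; exists (A.2 y) => //; apply/mapP; exists y. Qed.

Lemma valid_mul (C : eqType) (A B : cfmx C) : valid A -> valid B -> valid (cfmul A B).
Proof.
move=> vA vB x z; rewrite cfmulE => H.
apply/negPn/negP => Hn; move: H; rewrite big1_seq ?eqxx // => y /andP[_ yr].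
apply/eqP; apply: contraNT Hn; rewrite mulf_eq0 negb_or => /andP[Ha Hb].
apply: (cfmul_mem (y := y)); [exact: vB | exact: vA].
Qed.

Lemma valid_id (C : eqType) : valid (cfid C).
Proof. move=> x z /= H; rewrite inE; apply: contraNT H => /negbTE ->; exact: eqxx. Qed.

Lemma cfmul_id (C : eqType) (A : cfmx C) x z : (cfmul A (cfid C)).1 x z = A.1 x z.
Proof. by rewrite cfmulE /= big_cons big_nil eqxx mulr1 addr0. Qed.

Lemma cfmul_single (C : eqType) (A B : cfmx C) x z u : valid B ->
  (forall a, a != u -> A.1 x a = 0) -> (cfmul A B).1 x z = A.1 x u * B.1 u z.
Proof.
move=> vB H; rewrite cfmulE (sum_single (u := u)) ?undup_uniq //.
  by move=> a /H ->; rewrite mul0r.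
rewrite mem_undup => nu; have : B.1 u z == 0.
  by apply: contraNT nu => /vB.
by move/eqP ->; rewrite mulr0.
Qed.

Lemma cfmul_single_r (C : eqType) (A B : cfmx C) x z u :
  (forall b, b != u -> B.1 b z = 0) -> u \in B.2 z ->
  (cfmul A B).1 x z = A.1 x u * B.1 u z.
Proof.
move=> H uB; rewrite cfmulE (sum_single (u := u)) ?undup_uniq ?mem_undup ?uB //.
by move=> a /H ->; rewrite mulr0.
Qed.

Lemma key (S C : eqType) (mst : S -> S -> nat) (I : C -> pred S)
  (m : S -> C -> C -> nat) (supp : S -> C -> seq C)
  (HW : is_WGraph mst I m supp) (s t : S) (u w : C) :
  s != t -> mst s t = 3%N -> I u s -> ~~ I u t -> I w s -> ~~ I w t ->
  (\sum_(a <- undup (supp t w)) (m s u a * m t a w) = (u == w))%N.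
Proof.
case: HW => Hsupp [HI [_ Hb]] st m3 ius iut iws iwt.
have := Hb s t st u w; rewrite m3; simpl braidprod.
set om := omega I m supp.
have mz : forall r a b, ~~ (I a r && ~~ I b r) -> m r a b = 0%N.
  by move=> r a b H; apply/eqP; apply: contraNT H; apply: HI.
have vom : forall r, valid (om r).
  move=> r x z; rewrite /om /omega /=; case: (eqVneq x z) => [->|nxz].
    by rewrite inE eqxx.
  move=> H; rewrite inE (negbTE nxz) /=; apply: Hsupp.
  by apply/eqP => E; rewrite E eqxx in H.
have omd : forall r a, (om r).1 a a = if I a r then -vK^-1 else vK.
  by move=> r a; rewrite /om /omega /= eqxx.
have omo : forall r a b, a != b -> (om r).1 a b = (m r a b)%:R.
  by move=> r a b nab; rewrite /om /omega /= (negbTE nab).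
have pw : forall a, (om s).1 u a * (om t).1 a w
    = (m s u a * m t a w)%:R - ((u == w) && (a == u))%:R.
  move=> a; case: (eqVneq a u) => [->|nau].
    rewrite omd ius (mz s u u) ?andbN // mul0n andbT sub0r.
    case: (eqVneq u w) => [<-|nuw].
      by rewrite omd (negbTE iut) mulNr mulVf ?vK_neq0.
    by rewrite omo // (mz t u w) ?(negbTE iut) // mulr0 oppr0.
  rewrite (omo s u a); last by rewrite eq_sym.
  rewrite andbF subr0.
  case: (eqVneq a w) => [->|naw].
    by rewrite (mz s u w) ?iws ?andbF // mul0r mul0n.
  by rewrite omo // natrM.
set Pn := (\sum_(a <- undup (supp t w)) (m s u a * m t a w))%N.
have Gsum : forall r, uniq r -> w \in r -> {subset supp t w <= r} ->
    \sum_(a <- r) (om s).1 u a * (om t).1 a w = Pn%:R - (u == w)%:R.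
  move=> r ur wr sr; under eq_bigr do rewrite pw.
  rewrite sumrB; congr (_ - _).
    rewrite /Pn natr_sum; apply: sum_lists => //; first exact: undup_uniq.
    move=> a H; have : (m t a w != 0)%N.
      by apply: contra H => /eqP E; rewrite E muln0.
    by move/Hsupp => aw; rewrite mem_undup aw sr.
  case: (eqVneq u w) => [E|nuw].
    rewrite -E in wr *; rewrite (sum_single (u := u)) ?eqxx //.
      by move=> a na; rewrite (negbTE na) andbF.
    by rewrite wr.
  by rewrite big1 // => a _; rewrite (negbTE nuw).
have wsid : w \in (cfmul (om s) (cfid C)).2 w.
  by apply: (cfmul_mem (y := w)); rewrite /= inE eqxx.
have M2E : forall a, (cfmul (om t) (cfmul (om s) (cfid C))).1 a w
    = (om t).1 a w * (om s).1 w w.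
  move=> a; rewrite (@cfmul_single_r _ _ _ _ _ w) ?cfmul_id //.
  move=> b nb; rewrite cfmul_id omo // (mz s b w) ?iws ?andbF //.
rewrite cfmulE; under eq_bigr do rewrite M2E mulrA.
rewrite -big_distrl Gsum; first last.
- move=> a aw; rewrite mem_undup; apply: (cfmul_mem (y := w)) => //.
  by rewrite /om /= inE; apply/orP; right.
- by rewrite mem_undup; apply: (cfmul_mem (y := w)) => //; rewrite /om /= inE eqxx.
- exact: undup_uniq.
rewrite (@cfmul_single _ _ _ _ _ u); first last.
- move=> a na; rewrite omo 1?eq_sym // (mz t u a) ?(negbTE iut) //.
- exact: valid_mul (vom s) (valid_mul (vom t) (@valid_id C)).
have D2E : (cfmul (om s) (cfmul (om t) (cfid C))).1 u w = Pn%:R - (u == w)%:R.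
  rewrite cfmulE; under eq_bigr do rewrite cfmul_id.
  apply: Gsum; first exact: undup_uniq.
    by rewrite mem_undup /= inE eqxx.
  move=> a aw; rewrite mem_undup; apply: (cfmul_mem (y := w)); first by rewrite inE.
  by rewrite /om /= inE; apply/orP; right.
rewrite D2E !omd iws (negbTE iut) /=.
set X := _ - _ => E.
have : X * (vK + vK^-1) == 0 by rewrite mulrDr (mulrC X vK) -E mulrN addNr.
rewrite mulf_eq0 (negbTE vKinv_neq0) orbF subr_eq0 => /eqP.
exact: natKv_inj.
Qed.

Lemma term_le (T : eqType) (r : seq T) (F : T -> nat) b :
  uniq r -> b \in r -> (F b <= \sum_(a <- r) F a)%N.
Proof. by move=> ur br; rewrite (bigD1_seq b) //= leq_addr. Qed.

Lemma exists_pos (T : eqType) (r : seq T) (F : T -> nat) :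
  (0 < \sum_(a <- r) F a)%N -> exists2 a, a \in r & (0 < F a)%N.
Proof.
move=> H; have : has (fun a => 0 < F a)%N r.
  apply: contraLR H => /hasPn H'; rewrite -leqNgt leqn0; apply/eqP.
  by apply: big1_seq => a /andP[_ /H']; rewrite lt0n negbK => /eqP.
by move/hasP.
Qed.

Lemma claimA (S C : eqType) (mst : S -> S -> nat) (I : C -> pred S)
  (m : S -> C -> C -> nat) (supp : S -> C -> seq C)
  (HW : is_WGraph mst I m supp) (s t : S) (x y : C) :
  s != t -> mst s t = 3%N -> mst t s = 3%N ->
  I x s -> ~~ I x t -> I y t -> ~~ I y s -> (0 < m s x y)%N ->
  m t y x = 1%N /\ m s x y = 1%N.
Proof.
move=> st m3 m3' ixs ixt iyt iys pos.
have [Hsupp [HI _]] := HW.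
have ts : t != s by rewrite eq_sym.
have K1 := key HW ts m3' iyt iys iyt iys; rewrite eqxx in K1.
have [a ar Ha] : exists2 a, a \in undup (supp s y) & (0 < m t y a * m s a y)%N.
  by apply: exists_pos; rewrite K1.
have Hle := term_le (fun a => m t y a * m s a y)%N (undup_uniq (supp s y)) ar.
rewrite K1 /= in Hle.
have : (m t y a * m s a y == 1)%N by rewrite eqn_leq Hle Ha.
rewrite muln_eq1 => /andP[/eqP E1 /eqP E2].
have /andP[ias _] : I a s && ~~ I y s by apply: HI; rewrite E2.
have /andP[_ iat] : I y t && ~~ I a t by apply: HI; rewrite E1.
have K2 := key HW st m3 ixs ixt ias iat.
have yr : y \in undup (supp t a) by rewrite mem_undup; apply: Hsupp; rewrite E1.
have Hle2 := term_le (fun b => m s x b * m t b a)%N (undup_uniq (supp t a)) yr.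
rewrite K2 /= E1 muln1 in Hle2.
have xa : x == a.
  move: Hle2 pos; case: (x == a) => //= H1 H2.
  by have := leq_trans H2 H1.
move/eqP: xa => xa; subst a; split; first by [].
by apply/eqP; rewrite eqn_leq pos andbT; move: Hle2; rewrite eqxx.
Qed.

Theorem lemma4p5p5 (S C : eqType) (mst : S -> S -> nat)
  (mst_sym : forall s t, mst s t = mst t s)
  (mst_diag : forall s, mst s s = 1%N)
  (mst_off : forall s t, s != t -> mst s t = 2%N \/ mst s t = 3%N)
  (I : C -> pred S) (m : S -> C -> C -> nat) (supp : S -> C -> seq C)
  (HW : is_WGraph mst I m supp)
  (x y : C) (Hxy : transversal_edge mst (I x) (I y)) :
  forall s t, I x s && ~~ I y s -> I y t && ~~ I x t ->
    m s x y = m t y x /\ (m s x y <= 1)%N.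
Proof.
move=> s t Hs Ht.
have [_ [_ H3]] := Hxy.
have ge3 := H3 s t Hs Ht.
case/andP: Hs => ixs iys; case/andP: Ht => iyt ixt.
have st : s != t by apply/eqP => E; subst t; rewrite ixs in ixt.
have m3 : mst s t = 3%N.
  by case: (mst_off s t st) => // E; rewrite E in ge3.
have m3' : mst t s = 3%N by rewrite mst_sym.
have ts : t != s by rewrite eq_sym.
case: (posnP (m s x y)) => [E|p].
  case: (posnP (m t y x)) => [E'|p']; first by rewrite E E'.
  have [E2 _] := claimA HW ts m3' m3 iyt iys ixs ixt p'.
  by rewrite E in E2.
have [E1 E2] := claimA HW st m3 m3' ixs ixt iyt iys p.
by rewrite E1 E2.
Qed.
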